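(* Let $\Psi$ be a well-formed declarative context and $\beta\notin\Psi$. If $\mathcal D$ is a derivation of $\Psi\vdash A\le\forall\beta.B$, then there is a derivation $\mathcal D'$ of $\Psi,\beta\vdash A\le B$ whose size is strictly smaller than that of $\mathcal D$.
   Context: Types $A,B ::= 1\mid\alpha\mid\forall\alpha.A\mid A\to B$ (bound variables may be renamed, so $\beta$ can be assumed not declared in $\Psi$); monotypes $\tau ::= 1\mid\alpha\mid\tau\to\tau'$. Declarative contexts $\Psi ::= \cdot\mid\Psi,\alpha\mid\Psi,x:A$. Well-formedness $\Psi\vdash A$: all free type variables of $A$ are declared in $\Psi$. Declarative subtyping $\Psi\vdash A\le B$ is the least relation with: $\alpha\in\Psi\Rightarrow\Psi\vdash\alpha\le\alpha$; $\Psi\vdash1\le1$; ($\Psi\vdash B_1\le A_1$, $\Psi\vdash A_2\le B_2$) $\Rightarrow\Psi\vdash A_1\to A_2\le B_1\to B_2$; ($\Psi\vdash\tau$ monotype, $\Psi\vdash[\tau/\alpha]A\le B$) $\Rightarrow\Psi\vdash\forall\alpha.A\le B$; ($\Psi,\beta\vdash A\le B$) $\Rightarrow\Psi\vdash A\le\forall\beta.B$. The size of a derivation is its number of rule instances. *)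

(* Defs.v *)
(* Locally nameless representation of the types
   A,B ::= 1 | alpha | forall alpha. A | A -> B
   Free type variables are names (nat); bound ones are de Bruijn indices,
   so alpha-equivalent types are syntactically equal. *)
From Stdlib Require Import List Arith.
Import ListNotations.

Inductive typ : Type :=
| TUnit : typ
| TFVar : nat -> typ
| TBVar : nat -> typ
| TAll  : typ -> typ
| TArr  : typ -> typ -> typ.

Fixpoint open_rec (k : nat) (u : typ) (A : typ) : typ :=
  match A with
  | TUnit => TUnit
  | TFVar a => TFVar a
  | TBVar n => if Nat.eqb n k then u else TBVar n
  | TAll A1 => TAll (open_rec (S k) u A1)
  | TArr A1 A2 => TArr (open_rec k u A1) (open_rec k u A2)
  end.

(* open A u : the body A of (forall alpha. A) with alpha := u, i.e. [u/alpha]A *)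
Definition open (A u : typ) : typ := open_rec 0 u A.

Fixpoint fv (A : typ) : list nat :=
  match A with
  | TUnit => []
  | TFVar a => [a]
  | TBVar _ => []
  | TAll A1 => fv A1
  | TArr A1 A2 => fv A1 ++ fv A2
  end.

Fixpoint closed_at (k : nat) (A : typ) : Prop :=
  match A with
  | TUnit => True
  | TFVar _ => True
  | TBVar n => n < k
  | TAll A1 => closed_at (S k) A1
  | TArr A1 A2 => closed_at k A1 /\ closed_at k A2
  end.

Fixpoint mono (A : typ) : Prop :=
  match A with
  | TUnit => True
  | TFVar _ => True
  | TBVar _ => False
  | TAll _ => False
  | TArr A1 A2 => mono A1 /\ mono A2
  end.

(* Declarative contexts Psi ::= . | Psi, alpha | Psi, x : A
   (the list head is the most recent entry). *)
Inductive ctx_entry : Type :=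
| CTVar : nat -> ctx_entry
| CVar  : nat -> typ -> ctx_entry.

Definition ctx := list ctx_entry.

Definition tvar_in (a : nat) (G : ctx) : Prop := In (CTVar a) G.

Definition var_in (x : nat) (G : ctx) : Prop := exists A, In (CVar x A) G.

Definition wft (G : ctx) (A : typ) : Prop :=
  closed_at 0 A /\ forall a, In a (fv A) -> tvar_in a G.

Inductive wfctx : ctx -> Prop :=
| wf_nil : wfctx []
| wf_tvar : forall G a, wfctx G -> ~ tvar_in a G -> wfctx (CTVar a :: G)
| wf_var : forall G x A, wfctx G -> ~ var_in x G -> wft G A ->
    wfctx (CVar x A :: G).

(* Declarative subtyping derivations (in Type, so they have a size). *)
Inductive sub : ctx -> typ -> typ -> Type :=
| S_Var : forall G a, tvar_in a G -> sub G (TFVar a) (TFVar a)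
| S_Unit : forall G, sub G TUnit TUnit
| S_Arr : forall G A1 A2 B1 B2,
    sub G B1 A1 -> sub G A2 B2 -> sub G (TArr A1 A2) (TArr B1 B2)
| S_AllL : forall G A B tau,
    mono tau -> wft G tau -> sub G (open A tau) B -> sub G (TAll A) B
| S_AllR : forall G A B b,
    (* the bound variable beta is chosen fresh (renaming of bound vars) *)
    ~ tvar_in b G -> ~ In b (fv A) -> ~ In b (fv B) ->
    sub (CTVar b :: G) A (open B (TFVar b)) -> sub G A (TAll B).

Fixpoint size {G A B} (d : sub G A B) : nat :=
  match d with
  | S_Var _ _ _ => 1
  | S_Unit _ => 1
  | S_Arr _ _ _ _ _ d1 d2 => S (size d1 + size d2)
  | S_AllL _ _ _ _ _ _ d1 => S (size d1)
  | S_AllR _ _ _ _ _ _ _ d1 => S (size d1)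
  end.

(* Main.v *)
Require Import Defs.
From Stdlib Require Import List Arith Lia.
Import ListNotations.

Definition sw (x y n : nat) : nat :=
  if Nat.eqb n x then y else if Nat.eqb n y then x else n.

Fixpoint tsw (x y : nat) (A : typ) : typ :=
  match A with
  | TUnit => TUnit
  | TFVar a => TFVar (sw x y a)
  | TBVar n => TBVar n
  | TAll A1 => TAll (tsw x y A1)
  | TArr A1 A2 => TArr (tsw x y A1) (tsw x y A2)
  end.

Definition esw (x y : nat) (e : ctx_entry) : ctx_entry :=
  match e with
  | CTVar a => CTVar (sw x y a)
  | CVar z T => CVar z T
  end.

Definition csw x y (G : ctx) : ctx := map (esw x y) G.

Lemma sw_inv x y n : sw x y (sw x y n) = n.
Proof.
  unfold sw. destruct (Nat.eqb_spec n x); destruct (Nat.eqb_spec y x);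
  destruct (Nat.eqb_spec n y); subst; repeat (rewrite Nat.eqb_refl); auto;
  repeat match goal with |- context [Nat.eqb ?a ?b] => destruct (Nat.eqb_spec a b) end;
  subst; auto; congruence.
Qed.

Lemma tvar_in_csw x y a G : tvar_in a (csw x y G) <-> tvar_in (sw x y a) G.
Proof.
  unfold tvar_in, csw. rewrite in_map_iff. split.
  - intros [e [He Hin]]. destruct e; simpl in He; try discriminate.
    inversion He; subst. rewrite sw_inv. auto.
  - intros H. exists (CTVar (sw x y a)). simpl. rewrite sw_inv. auto.
Qed.

Lemma tsw_open x y A : forall k u,
  tsw x y (open_rec k u A) = open_rec k (tsw x y u) (tsw x y A).
Proof.
  induction A; intros; simpl; auto.
  - destruct (Nat.eqb n k); auto.
  - rewrite IHA; auto.
  - rewrite IHA1, IHA2; auto.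
Qed.

Lemma mono_tsw x y A : mono A -> mono (tsw x y A).
Proof. induction A; simpl; tauto. Qed.

Lemma closed_tsw x y A : forall k, closed_at k A -> closed_at k (tsw x y A).
Proof. induction A; simpl; intuition. Qed.

Lemma fv_tsw x y A a : In a (fv (tsw x y A)) -> In (sw x y a) (fv A).
Proof.
  induction A; simpl; intuition.
  - subst. rewrite sw_inv. auto.
  - apply in_app_or in H. apply in_or_app. intuition.
Qed.

Lemma wft_tsw x y G A : wft G A -> wft (csw x y G) (tsw x y A).
Proof.
  intros [H1 H2]. split. apply closed_tsw; auto.
  intros a Ha. apply tvar_in_csw. apply H2. apply fv_tsw; auto.
Qed.

Lemma sub_swap x y G A B (d : sub G A B) :
  { d' : sub (csw x y G) (tsw x y A) (tsw x y B) | size d' = size d }.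
Proof.
  induction d.
  - assert (t' : tvar_in (sw x y a) (csw x y G)).
    { apply tvar_in_csw. rewrite sw_inv. exact t. }
    exists (S_Var _ _ t'). reflexivity.
  - exists (S_Unit _). reflexivity.
  - destruct IHd1 as [e1 H1], IHd2 as [e2 H2].
    exists (S_Arr _ _ _ _ _ e1 e2). cbn [size]; first [lia | f_equal; assumption | f_equal; f_equal; assumption].
  - destruct IHd as [e He]. revert e He. unfold open. rewrite tsw_open. intros e He.
    exists (S_AllL _ _ _ (tsw x y tau) (mono_tsw _ _ _ m) (wft_tsw _ _ _ _ w) e).
    cbn [size]. f_equal. exact He.
  - destruct IHd as [e He]. revert e He. unfold open. rewrite tsw_open. simpl. intros e He.
    assert (n2 : ~ tvar_in (sw x y b) (csw x y G)).
    { rewrite tvar_in_csw, sw_inv. auto. }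
    assert (n3 : ~ In (sw x y b) (fv (tsw x y A))).
    { intro H. apply fv_tsw in H. rewrite sw_inv in H. auto. }
    assert (n4 : ~ In (sw x y b) (fv (tsw x y B))).
    { intro H. apply fv_tsw in H. rewrite sw_inv in H. auto. }
    exists (S_AllR _ _ _ _ n2 n3 n4 e). cbn [size]; first [lia | f_equal; assumption | f_equal; f_equal; assumption].
Qed.

Lemma wft_transport G G' A : (forall a, tvar_in a G <-> tvar_in a G') ->
  wft G A -> wft G' A.
Proof. intros H [H1 H2]. split; auto. intros a Ha. apply H. auto. Qed.

Lemma sub_transport G A B (d : sub G A B) : forall G',
  (forall a, tvar_in a G <-> tvar_in a G') ->
  { d' : sub G' A B | size d' = size d }.
Proof.
  induction d; intros G' HG.
  - exists (S_Var _ _ (proj1 (HG a) t)). reflexivity.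
  - exists (S_Unit _). reflexivity.
  - destruct (IHd1 G' HG) as [e1 H1], (IHd2 G' HG) as [e2 H2].
    exists (S_Arr _ _ _ _ _ e1 e2). cbn [size]; first [lia | f_equal; assumption | f_equal; f_equal; assumption].
  - destruct (IHd G' HG) as [e He].
    exists (S_AllL _ _ _ _ m (wft_transport _ _ _ HG w) e). cbn [size]; first [lia | f_equal; assumption | f_equal; f_equal; assumption].
  - assert (HG2 : forall a, tvar_in a (CTVar b :: G) <-> tvar_in a (CTVar b :: G')).
    { intro a. unfold tvar_in; simpl. specialize (HG a). unfold tvar_in in HG. tauto. }
    destruct (IHd _ HG2) as [e He].
    assert (n2 : ~ tvar_in b G'). { rewrite <- HG. auto. }
    exists (S_AllR _ _ _ _ n2 n0 n1 e). cbn [size]; first [lia | f_equal; assumption | f_equal; f_equal; assumption].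
Qed.

Lemma fv_open A : forall k u a, In a (fv A) -> In a (fv (open_rec k u A)).
Proof.
  induction A; simpl; intros; auto.
  - contradiction.
  - apply in_app_or in H. apply in_or_app. intuition.
Qed.

Lemma sub_fv G A B (d : sub G A B) :
  (forall a, In a (fv A) -> tvar_in a G) /\ (forall a, In a (fv B) -> tvar_in a G).
Proof.
  induction d; simpl.
  - split; intros a0 [H|[]]; subst; auto.
  - split; intros _ [].
  - destruct IHd1, IHd2. split; intros a Ha; apply in_app_or in Ha; intuition.
  - destruct IHd. split; auto. intros a Ha. apply H. apply fv_open. auto.
  - destruct IHd as [H1 H2]. split; intros a Ha.
    + destruct (H1 a Ha) as [E|E]; auto. inversion E; subst; contradiction.
    + destruct (H2 a (fv_open _ _ _ _ Ha)) as [E|E]; auto.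
      inversion E; subst; contradiction.
Qed.

Lemma tsw_id x y A : ~ In x (fv A) -> ~ In y (fv A) -> tsw x y A = A.
Proof.
  induction A; simpl; intros; auto.
  - unfold sw. destruct (Nat.eqb_spec n x); [subst; tauto|].
    destruct (Nat.eqb_spec n y); [subst; tauto|]. auto.
  - rewrite IHA; auto.
  - rewrite IHA1, IHA2; auto; intro HH;
      first [apply H; apply in_or_app; now auto | apply H0; apply in_or_app; now auto].
Qed.

Lemma main_gen G A C (d : sub G A C) : forall b B, C = TAll B -> ~ tvar_in b G ->
  exists D' : sub (CTVar b :: G) A (open B (TFVar b)), size D' < size d.
Proof.
  induction d; intros b0 B0 HC Hb; try discriminate.
  - destruct (IHd b0 B0 HC Hb) as [e He].
    assert (w' : wft (CTVar b0 :: G) tau).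
    { destruct w as [w1 w2]. split; auto. intros a Ha. right. apply w2; auto. }
    exists (S_AllL _ _ _ _ m w' e). cbn [size]; first [lia | f_equal; assumption | f_equal; f_equal; assumption].
  - inversion HC; subst B0.
    destruct (sub_fv _ _ _ d) as [F1 F2].
    assert (nbA : ~ In b0 (fv A)).
    { intro H. destruct (F1 _ H) as [E|E]; [inversion E; subst; contradiction | contradiction]. }
    assert (nbB : ~ In b0 (fv B)).
    { intro H. destruct (F2 _ (fv_open _ _ _ _ H)) as [E|E];
      [inversion E; subst; contradiction | contradiction]. }
    destruct (sub_swap b b0 _ _ _ d) as [e He].
    revert e He. unfold open. rewrite tsw_open. simpl.
    rewrite (tsw_id _ _ A n0 nbA), (tsw_id _ _ B n1 nbB).
    replace (sw b b0 b) with b0 by (unfold sw; rewrite Nat.eqb_refl; auto).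
    intros e He.
    assert (HG : forall a, tvar_in a (CTVar b0 :: csw b b0 G) <-> tvar_in a (CTVar b0 :: G)).
    { intro a. pose proof (tvar_in_csw b b0 a G) as P. unfold tvar_in in *. simpl.
      rewrite P. unfold sw.
      destruct (Nat.eqb_spec a b); subst.
      - split; intros [E|E]; auto; contradiction.
      - destruct (Nat.eqb_spec a b0); subst; [|tauto].
        split; intros [E|E]; auto; contradiction. }
    destruct (sub_transport _ _ _ e _ HG) as [e' He'].
    exists e'. rewrite He'. unfold lt. apply le_n_S. rewrite He. apply le_n.
Qed.

Theorem mainTheorem13 (G : ctx) (A B : typ) (b : nat) :
  wfctx G -> ~ tvar_in b G ->
  forall D : sub G A (TAll B),
    exists D' : sub (CTVar b :: G) A (open B (TFVar b)), size D' < size D.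
Proof.
  intros _ Hb D. exact (main_gen _ _ _ D b B eq_refl Hb).
Qed.
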